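(* Let $X=(X_1,\dots,X_p)^\top$ be a strictly positive random vector following a recursive max-linear structural equation model on a DAG $\mathcal G^*=(V,E^* )$, $V=\{1,\dots,p\}$: $X_j=\max\big(\max_{m\in\mathrm{pa}^*(j)}a_{mj}X_m,\ \epsilon_j\big)$ with $a_{mj}>0$ and mutually independent unit Fréchet innovations $\epsilon_1,\dots,\epsilon_p$. Fix a node $j$ with $\mathrm{pa}^*(j)\neq\emptyset$, and let $\mathrm{nb}^*(j)=\{i:(i,j)\in E^*\text{ or }(j,i)\in E^*\}$. Assume: (A) (non-vanishing error for omitted parents) for every nonempty $A\subseteq\mathrm{nb}^*(j)$ with $A\not\supseteq\mathrm{pa}^*(j)$, $\liminf_{u\to\infty}\big[R^\star_{j\mid A}(u)-R^\star_{j\mid\mathrm{pa}^*(j)}(u)\big]>0$; (B) (no gain from spurious supersets) for every $A\subseteq \mathrm{nb}^*(j)$ with $A\supsetneq\mathrm{pa}^*(j)$, $R^\star_{j\mid A}(u)\ge R^\star_{j\mid\mathrm{pa}^*(j)}(u)$ for all sufficiently large $u$. Then for every sufficiently large fixed threshold $u$, $\mathrm{pa}^*(j)$ is the unique inclusion-minimal minimizer of $A\mapsto R^\star_{j\mid A}(u)$ over nonempty $A\subseteq\mathrm{nb}^*(j)$; that is, it is a minimizer and every minimizer contains $\mathrm{pa}^*(j)$.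
   Context: For each $j$, $F_j$ is the distribution function of $X_j$, $Y_j=1/(1-F_j(X_j))$ and, for a threshold $u>1$, $Z_j=\log Y_j-\log u$. For a nonempty $A\subseteq V\setminus\{j\}$, the multivariate max-linear envelope class is $\mathcal H_A=\{h_A(z_A)=\max(c_0,\max_{m\in A}(z_m+c_{m\to j})): c_0, c_{m\to j}\in\mathbb R\}$, and the population tail prediction risk is $R^\star_{j\mid A}(u)=\inf_{h_A\in\mathcal H_A}\mathbb E\big[|Z_j-h_A(Z_A)|\ \big|\ \max_{m\in A}Z_m>0\big]$. *)

(* Defs.v *)
From HB Require Import structures.
From mathcomp Require Import all_boot all_order all_algebra.
From mathcomp Require Import all_classical all_reals all_analysis.
Set Implicit Arguments. Unset Strict Implicit. Unset Printing Implicit Defensive.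
Import Order.TTheory GRing.Theory Num.Theory.
Local Open Scope classical_set_scope.
Local Open Scope ring_scope.

Section Defs.
Context {R : realType} {d : measure_display} {T : measurableType d}.
Context (P : probability T R) (p : nat).

(* E is a DAG on V = 'I_p: there is a ranking strictly increasing along edges
   (equivalently, no directed cycle). *)
Definition is_dag (E : rel 'I_p) : Prop :=
  exists rk : 'I_p -> nat, forall i j, E i j -> (rk i < rk j)%N.

Definition pa (E : rel 'I_p) (j : 'I_p) : {set 'I_p} := [set m | E m j].
Definition nb (E : rel 'I_p) (j : 'I_p) : {set 'I_p} := [set i | E i j || E j i].

Definition mutually_independent (eps : 'I_p -> T -> R) : Prop :=
  forall (S : {set 'I_p}) (B : 'I_p -> set R),
    (forall i, measurable (B i)) ->
    P [set t | forall i, i \in S -> B i (eps i t)] =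
    (\prod_(i in S) fine (P (eps i @^-1` B i)))%:E.

Definition unit_frechet (e : T -> R) : Prop :=
  forall x : R, P [set t | e t <= x] = (if 0 < x then expR (- x^-1) else 0)%:E.

Definition max_linear_sem (E : rel 'I_p) (a : 'I_p -> 'I_p -> R)
  (eps X : 'I_p -> T -> R) : Prop :=
  forall j t, X j t = Num.max (\big[Num.max/0]_(m in pa E j) (a m j * X m t)) (eps j t).

Definition cdf (X : 'I_p -> T -> R) (j : 'I_p) (x : R) : R :=
  fine (P [set t | X j t <= x]).

Definition Yv (X : 'I_p -> T -> R) (j : 'I_p) (t : T) : R :=
  1 / (1 - cdf X j (X j t)).
Definition Zv (X : 'I_p -> T -> R) (u : R) (j : 'I_p) (t : T) : R :=
  ln (Yv X j t) - ln u.

Definition envelope (A : {set 'I_p}) (c0 : R) (c : 'I_p -> R) (z : 'I_p -> R) : R :=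
  \big[Num.max/c0]_(m in A) (z m + c m).

Definition tail_event (X : 'I_p -> T -> R) (u : R) (A : {set 'I_p}) : set T :=
  [set t | (0 < \big[Order.max/-oo]_(m in A) (Zv X u m t)%:E)%E].

Definition cond_risk (X : 'I_p -> T -> R) (u : R) (j : 'I_p) (A : {set 'I_p})
  (c0 : R) (c : 'I_p -> R) : \bar R :=
  ((\int[P]_(t in tail_event X u A)
       (`| Zv X u j t - envelope A c0 c (fun m => Zv X u m t) |)%:E)
   / P (tail_event X u A))%E.

Definition tail_risk (X : 'I_p -> T -> R) (u : R) (j : 'I_p) (A : {set 'I_p}) : \bar R :=
  ereal_inf [set r | exists (c0 : R) (c : 'I_p -> R), r = cond_risk X u j A c0 c].

End Defs.

(* Main.v *)
Require Import Defs.
From HB Require Import structures.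
From mathcomp Require Import all_boot all_order all_algebra.
From mathcomp Require Import all_classical all_reals all_analysis.
From mathcomp Require Import lra.
Import Order.TTheory GRing.Theory Num.Theory.
Local Open Scope classical_set_scope.
Local Open Scope ring_scope.

Lemma foo (R : realType) (c : R) (x y : \bar R) : 0 < c -> (c%:E <= x - y)%E -> (y < x)%E.
Proof.
move=> c0; case: x => [x| |]; case: y => [y| |] //=; rewrite ?lee_fin ?lte_fin.
all: try (by rewrite ?ltNye ?ltey).
move=> h; rewrite -subr_gt0; exact: lt_le_trans c0 h.
Qed.
Lemma fin_ev (I : finType) (R : realType) (G : I -> R -> Prop) :
  (forall i, exists u0, forall u, u0 <= u -> G i u) ->
  exists u0, forall i u, u0 <= u -> G i u.
Proof.
move=> H.
suff: forall s : seq I, exists u0 : R, forall i u, i \in s -> u0 <= u -> G i u.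
  by case/(_ (enum I)) => u0 Hu; exists u0 => i u; apply: Hu; rewrite mem_enum.
elim=> [|i s [u1 H1]]; first by exists 0.
have [u2 H2] := H i.
exists (Num.max u1 u2) => k u; rewrite inE => /orP [/eqP->|ks] hu.
  by apply: H2; apply: le_trans hu; rewrite le_max lexx orbT.
by apply: H1 => //; apply: le_trans hu; rewrite le_max lexx.
Qed.

Theorem theorem2 (R : realType) (d : measure_display) (T : measurableType d)
  (P : probability T R) (p : nat) (E : rel 'I_p) (a : 'I_p -> 'I_p -> R)
  (eps X : 'I_p -> T -> R) (j : 'I_p) :
  is_dag E ->
  (forall m i, E m i -> 0 < a m i) ->
  (forall i, measurable_fun setT (eps i)) ->
  (forall i, measurable_fun setT (X i)) ->
  mutually_independent P eps ->
  (forall i, unit_frechet P (eps i)) ->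
  max_linear_sem E a eps X ->
  (forall i t, 0 < X i t) ->
  pa E j != finset.set0 ->
  (* (A) non-vanishing error for omitted parents (liminf > 0, written out) *)
  (forall A : {set 'I_p}, A != finset.set0 -> A \subset nb E j -> ~~ (pa E j \subset A) ->
     exists2 c : R, 0 < c & exists u0 : R, forall u, u0 <= u ->
       (c%:E <= tail_risk P X u j A - tail_risk P X u j (pa E j))%E) ->
  (* (B) no gain from spurious supersets *)
  (forall A : {set 'I_p}, A \subset nb E j -> pa E j \proper A ->
     exists u0 : R, forall u, u0 <= u ->
       (tail_risk P X u j (pa E j) <= tail_risk P X u j A)%E) ->
  exists2 u0 : R, 1 < u0 & forall u, u0 <= u ->
    (forall B : {set 'I_p}, B != finset.set0 -> B \subset nb E j ->
       (tail_risk P X u j (pa E j) <= tail_risk P X u j B)%E) /\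
    (forall A : {set 'I_p}, A != finset.set0 -> A \subset nb E j ->
       (forall B : {set 'I_p}, B != finset.set0 -> B \subset nb E j ->
          (tail_risk P X u j A <= tail_risk P X u j B)%E) ->
       pa E j \subset A).
Proof.
move=> _ _ _ _ _ _ _ _ pa0 HA HB.
set G := fun (A : {set 'I_p}) (u : R) =>
  (A != finset.set0 -> A \subset nb E j -> ~~ (pa E j \subset A) ->
     (tail_risk P X u j (pa E j) < tail_risk P X u j A)%E) /\
  (A \subset nb E j -> pa E j \proper A ->
     (tail_risk P X u j (pa E j) <= tail_risk P X u j A)%E).
have [u1 Hu1] : exists u0 : R, forall A u, u0 <= u -> G A u.
  apply: fin_ev => A.
  have [u2 H2] : exists u0 : R, forall u, u0 <= u -> (A != finset.set0 -> A \subset nb E j -> ~~ (pa E j \subset A) ->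
     (tail_risk P X u j (pa E j) < tail_risk P X u j A)%E).
    case: (boolP [&& A != finset.set0, A \subset nb E j & ~~ (pa E j \subset A)]).
      case/and3P => a1 a2 a3; have [c c0 [u0 Hu]] := HA A a1 a2 a3.
      by exists u0 => u hu _ _ _; apply: foo c0 (Hu u hu).
    move=> hn; exists 0 => u _ a1 a2 a3; exfalso; move/negP: hn; apply.
    by rewrite a1 a2 a3.
  have [u3 H3] : exists u0 : R, forall u, u0 <= u -> (A \subset nb E j -> pa E j \proper A ->
     (tail_risk P X u j (pa E j) <= tail_risk P X u j A)%E).
    case: (boolP ((A \subset nb E j) && (pa E j \proper A))).
      by case/andP => a1 a2; have [u0 Hu] := HB A a1 a2; exists u0 => u hu _ _; apply: Hu.
    move=> hn; exists 0 => u _ a1 a2; exfalso; move/negP: hn; apply.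
    by rewrite a1 a2.
  exists (Num.max u2 u3) => u hu; split.
    by apply: H2; apply: le_trans hu; rewrite le_max lexx.
  by apply: H3; apply: le_trans hu; rewrite le_max lexx orbT.
have panb : pa E j \subset nb E j.
  by apply/fintype.subsetP => i; rewrite !inE => ->.
exists (Num.max 2 u1); first by rewrite lt_max ltr1n.
move=> u hu; have hu1 : u1 <= u by apply: le_trans hu; rewrite le_max lexx orbT.
split.
  move=> B B0 Bnb.
  case: (boolP (pa E j \subset B)) => hs.
    case: (eqVneq B (pa E j)) => [->|ne]; first exact: lexx.
    apply: (Hu1 B u hu1).2 => //.
    by rewrite finset.properEneq eq_sym ne hs.
  exact/ltW/((Hu1 B u hu1).1 B0 Bnb hs).
move=> A A0 Anb Hmin; apply/negPn/negP => hs.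
have := (Hu1 A u hu1).1 A0 Anb hs.
by rewrite ltNge Hmin.
Qed.
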